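(* Let $\mathbf{f} = (f_1, \ldots, f_m) : \mathcal{X} \to \mathcal{Y} \subset \mathbb{R}^m$ with $\mathcal{X} \subset \mathbb{R}^n$ be a multi-objective minimization problem whose ideal point $\mathbf{y}^* = (\min_{\mathbf{y} \in \mathcal{Y}^*} y_1, \ldots, \min_{\mathbf{y} \in \mathcal{Y}^*} y_m)$ is the zero vector, where $\mathcal{Y}^*$ is the Pareto front. Let $\mathbf{w} \in \mathbb{R}^m$ have positive entries and let $g_{\mathbf{w}}(\mathbf{x}) = \max_{1 \le j \le m} w_j |f_j(\mathbf{x}) - y^*_j|$ be the weighted Tchebycheff function with reference point the ideal point. Let $\mathbf{x}^1, \ldots, \mathbf{x}^{v(t)} \in \mathcal{X}$ be finitely many sampled points (with $v(t) \ge 1$), let $\mathbf{x}(t) \in \arg\min_{1 \le i \le v(t)} g_{\mathbf{w}}(\mathbf{x}^i)$, and let $$\mathcal{Y}^t_* = \{\mathbf{f}(\mathbf{x}^i) : 1 \le i \le v(t),\ \mathbf{f}(\mathbf{x}^k) \nprec \mathbf{f}(\mathbf{x}^i) \text{ for all } k \ne i\}.$$ Then $I^1_{\epsilon+}(\mathcal{Y}^t_* ) \le \max_j \frac{1}{w_j}\, g_{\mathbf{w}}(\mathbf{x}(t))$.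
   Context: Pareto dominance: $\mathbf{y}^1 \prec \mathbf{y}^2$ iff $y^1_j \le y^2_j$ for all $j$ and $y^1_k < y^2_k$ for some $k$. A vector $\hat{\mathbf{y}} \in \mathcal{Y}$ is Pareto optimal iff no $\mathbf{y} \in \mathcal{Y}$ satisfies $\mathbf{y} \prec \hat{\mathbf{y}}$; the set of Pareto optimal vectors is the Pareto front $\mathcal{Y}^*$. For sets $A, B \subseteq \mathbb{R}^m$, the additive $\epsilon$-indicator is $I_{\epsilon+}(A,B) = \inf\{\epsilon \in \mathbb{R} : \forall \mathbf{y}^2 \in B\ \exists \mathbf{y}^1 \in A \text{ with } y^1_j \le \epsilon + y^2_j \text{ for all } j\}$, and the unary version is $I^1_{\epsilon+}(A) = I_{\epsilon+}(A, \mathcal{Y}^* )$. *)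

(* Defs.v *)
From HB Require Import structures.
From mathcomp Require Import all_boot all_order all_algebra.
From mathcomp Require Import all_classical all_reals ereal.
Set Implicit Arguments. Unset Strict Implicit. Unset Printing Implicit Defensive.
Import Order.TTheory GRing.Theory Num.Theory.
Local Open Scope classical_set_scope.
Local Open Scope ring_scope.

Section Defs.
Variable R : realType.

Definition dominates (m : nat) (y1 y2 : 'rV[R]_m) : Prop :=
  (forall j : 'I_m, y1 ord0 j <= y2 ord0 j) /\ (exists k : 'I_m, y1 ord0 k < y2 ord0 k).

Definition pareto_front (m : nat) (Y : set 'rV[R]_m) : set 'rV[R]_m :=
  [set yh | Y yh /\ ~ (exists y, Y y /\ dominates y yh)].

Definition is_ideal_point (m : nat) (F : set 'rV[R]_m) (ystar : 'rV[R]_m) : Prop :=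
  forall j : 'I_m, (exists y, F y /\ y ord0 j = ystar ord0 j) /\
                   (forall y, F y -> ystar ord0 j <= y ord0 j).

Definition eps_indicator (m : nat) (A B : set 'rV[R]_m) : \bar R :=
  ereal_inf [set (e%:E)%E | e in
    [set e : R | forall y2, B y2 -> exists y1, A y1 /\
        forall j : 'I_m, y1 ord0 j <= e + y2 ord0 j]].

Definition eps_indicator1 (m : nat) (A front : set 'rV[R]_m) : \bar R :=
  eps_indicator A front.

(* weighted Tchebycheff function with reference point r
   (max over j; all terms are >= 0, so the default 0 is harmless) *)
Definition tcheb (n m : nat) (w : 'rV[R]_m) (f : 'rV[R]_n -> 'rV[R]_m)
  (r : 'rV[R]_m) (x : 'rV[R]_n) : R :=
  \big[Num.max/0]_(j < m) (w ord0 j * `|f x ord0 j - r ord0 j|).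

Definition sampled_front (n m v : nat) (f : 'rV[R]_n -> 'rV[R]_m)
  (xs : 'I_v -> 'rV[R]_n) : set 'rV[R]_m :=
  [set y | exists i : 'I_v, y = f (xs i) /\
     forall k : 'I_v, k != i -> ~ dominates (f (xs k)) (f (xs i))].

End Defs.

(* Main.v *)
Require Import Defs.
From HB Require Import structures.
From mathcomp Require Import all_boot all_order all_algebra.
From mathcomp Require Import all_classical all_reals ereal.
Import Order.TTheory GRing.Theory Num.Theory.
Local Open Scope classical_set_scope.
Local Open Scope ring_scope.

Theorem theorem3 (R : realType) (n m : nat)
  (X : set 'rV[R]_n) (f : 'rV[R]_n -> 'rV[R]_m)
  (hideal : is_ideal_point (pareto_front (f @` X)) 0)
  (w : 'rV[R]_m) (hw : forall j : 'I_m, 0 < w ord0 j)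
  (v : nat) (hv : (0 < v)%N) (xs : 'I_v -> 'rV[R]_n)
  (hxs : forall i : 'I_v, X (xs i))
  (it : 'I_v)
  (hit : forall i : 'I_v, tcheb w f 0 (xs it) <= tcheb w f 0 (xs i)) :
  (eps_indicator1 (sampled_front f xs) (pareto_front (f @` X))
    <= (\big[Num.max/0]_(j < m) ((w ord0 j)^-1 * tcheb w f 0 (xs it)))%:E)%E.
Proof.
set T := tcheb w f 0 (xs it).
set D := \big[Num.max/0]_(j < m) _.
pose P := [pred i : 'I_v | [forall j, f (xs i) ord0 j <= f (xs it) ord0 j]].
have Pit : P it by apply/forallP => j.
pose S := fun i : 'I_v => \sum_(j < m) f (xs i) ord0 j.
have [i Pi Hmin] : exists2 i, P i & forall k, P k -> S i <= S k.
  case: (arg_minP S Pit) => i Pi H; by exists i.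
have Hsf : sampled_front f xs (f (xs i)).
  exists i; split => // k _ [Hle [k0 Hlt]].
  have Pk : P k.
    apply/forallP => j; apply: le_trans (Hle j) _.
    by move/forallP: Pi => /(_ j).
  have := Hmin k Pk; rewrite /S.
  suff : \sum_(j < m) f (xs k) ord0 j < \sum_(j < m) f (xs i) ord0 j.
    by move=> h1 h2; have := lt_le_trans h1 h2; rewrite ltxx.
  rewrite (bigD1 k0) //= [X in _ < X](bigD1 k0) //=.
  apply: ltr_leD => //; apply: ler_sum => j _; exact: Hle.
have HD : forall j, f (xs i) ord0 j <= D.
  move=> j.
  apply: (le_trans (y := f (xs it) ord0 j)); first by move/forallP: Pi => /(_ j).
  apply: (le_trans (y := (w ord0 j)^-1 * T)); last first.
    by rewrite /D (bigD1 j) //= le_max lexx.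
  have wj := hw j.
  rewrite ler_pdivlMl //.
  apply: (le_trans (y := w ord0 j * `|f (xs it) ord0 j|)).
    by rewrite ler_pM2l // real_ler_norm // num_real.
  have -> : `|f (xs it) ord0 j| = `|f (xs it) ord0 j - (0 : 'rV[R]_m) ord0 j|.
    by rewrite mxE subr0.
  by rewrite /T /tcheb (bigD1 j) //= le_max lexx.
rewrite /eps_indicator1 /eps_indicator.
apply: ereal_inf_lbound; exists D => //.
move=> y2 Hy2; exists (f (xs i)); split => // j.
have [_ H0] := hideal j.
have := H0 y2 Hy2; rewrite mxE => h.
by rewrite -[f _ _ _]addr0; apply: lerD.
Qed.
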